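(* Let $E$ be a finite set, $X_1,\ldots,X_n$ fuzzy subsets of $E$, $l_1,\ldots,l_n\in\{0,1\}$, and $\Phi_{l_1,\ldots,l_n}(Y_1,\ldots,Y_n)=Y_1^{(l_1)}\cap\cdots\cap Y_n^{(l_n)}$. Then for every $j\in\{0,\ldots,|E|\}$, $$\mathcal{F}^A(Q^{j,1}_{exactly})\big(X_1^{(l_1)}\tilde\cap\cdots\tilde\cap X_n^{(l_n)}\big)=\sum_{\substack{Y\in\mathcal{P}(E):\\|Y|=j}} m_{X_1^{(l_1)}\tilde\cap\cdots\tilde\cap X_n^{(l_n)}}(Y)=\sum_{\substack{Y_1,\ldots,Y_n\in\mathcal{P}(E):\\|Y_1\cap\cdots\cap Y_n|=j}} m_{X_1^{(l_1)}}(Y_1)\cdots m_{X_n^{(l_n)}}(Y_n)=\mathcal{F}^A(Q^{j,1}_{exactly}\circ\Phi_{l_1,\ldots,l_n})(X_1,\ldots,X_n).$$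
   Context: For a fuzzy set $X$ on $E$ and crisp $Y\subseteq E$, $m_X(Y)=\prod_{e\in Y}\mu_X(e)\prod_{e\in E\setminus Y}(1-\mu_X(e))$. For a semi-fuzzy quantifier $Q:\mathcal{P}(E)^n\to[0,1]$, $\mathcal{F}^A(Q)(X_1,\ldots,X_n)=\sum_{Y_1,\ldots,Y_n\in\mathcal{P}(E)}m_{X_1}(Y_1)\cdots m_{X_n}(Y_n)Q(Y_1,\ldots,Y_n)$. For crisp sets $Y^{(1)}=Y$, $Y^{(0)}=E\setminus Y$; for fuzzy sets $X^{(1)}=X$, $X^{(0)}$ has membership $1-\mu_X$, and $\tilde\cap$ is the pointwise product. $Q^{j,1}_{exactly}(Y)=1$ if $|Y|=j$ and $0$ otherwise; $(Q^{j,1}_{exactly}\circ\Phi_{l_1,\ldots,l_n})(Y_1,\ldots,Y_n)=Q^{j,1}_{exactly}(\Phi_{l_1,\ldots,l_n}(Y_1,\ldots,Y_n))$. *)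

(* Defs.v *)
From HB Require Import structures.
From mathcomp Require Import all_boot all_order all_algebra.
Set Implicit Arguments. Unset Strict Implicit. Unset Printing Implicit Defensive.
Import Order.TTheory GRing.Theory Num.Theory.
Local Open Scope ring_scope.

Section FuzzyDefs.
Variables (R : numFieldType) (E : finType).

(* A fuzzy subset of E is its membership function E -> R (values in [0,1]). *)
Definition fuzzy_valid (X : E -> R) : Prop := forall e, 0 <= X e <= 1.

Definition mX (X : E -> R) (Y : {set E}) : R :=
  (\prod_(e in Y) X e) * (\prod_(e in ~: Y) (1 - X e)).

Definition crisp_pow (l : bool) (Y : {set E}) : {set E} := if l then Y else ~: Y.

Definition fuzzy_pow (l : bool) (X : E -> R) : E -> R :=
  fun e => if l then X e else 1 - X e.

Definition fuzzy_meet (n : nat) (l : 'I_n -> bool) (X : 'I_n -> E -> R) : E -> R :=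
  fun e => \prod_(i < n) fuzzy_pow (l i) (X i) e.

Definition FA (n : nat) (Q : {ffun 'I_n -> {set E}} -> R) (X : 'I_n -> E -> R) : R :=
  \sum_(Y : {ffun 'I_n -> {set E}}) (\prod_(i < n) mX (X i) (Y i)) * Q Y.

Definition Q_exactly (j : nat) (Y : {set E}) : R := if #|Y| == j then 1 else 0.

Definition Phi (n : nat) (l : 'I_n -> bool) (Y : 'I_n -> {set E}) : {set E} :=
  \bigcap_(i < n) crisp_pow (l i) (Y i).

Definition unaryQ (Q : {set E} -> R) : {ffun 'I_1 -> {set E}} -> R :=
  fun Y => Q (Y ord0).

End FuzzyDefs.

(* Main.v *)
Require Import Defs.
From HB Require Import structures.
From mathcomp Require Import all_boot all_order all_algebra.
Import Order.TTheory GRing.Theory Num.Theory.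
Local Open Scope ring_scope.

Section H.
Variables (R : numFieldType) (E : finType).

Lemma mX_prod (W : E -> R) (Y : {set E}) :
  mX W Y = \prod_e (if e \in Y then W e else 1 - W e).
Proof.
rewrite /mX [RHS](bigID (fun e => e \in Y)) /=; congr (_ * _).
  by apply: eq_bigr => e ->.
apply: eq_big => [e|e]; first by rewrite in_setC.
by rewrite in_setC => /negbTE ->.
Qed.

Lemma mX_pow l (W : E -> R) Y : mX (fuzzy_pow l W) (crisp_pow l Y) = mX W Y.
Proof.
rewrite !mX_prod /fuzzy_pow /crisp_pow; case: l => //.
apply: eq_bigr => e _; rewrite in_setC; case: (e \in Y) => //=.
by rewrite opprB addrC subrK.
Qed.

Lemma col_sum n (W : 'I_n -> E -> R) e b :
  \sum_(c : {ffun 'I_n -> bool} | [forall i, c i] == b)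
     \prod_i (if c i then W i e else 1 - W i e)
  = if b then \prod_i W i e else 1 - \prod_i W i e.
Proof.
have Ht : \sum_(c : {ffun 'I_n -> bool} | [forall i, c i])
     \prod_i (if c i then W i e else 1 - W i e) = \prod_i W i e.
  rewrite (big_pred1 [ffun=> true]).
    by apply: eq_bigr => i _; rewrite ffunE.
  move=> c /=; apply/forallP/eqP => [H|->].
    by apply/ffunP => i; rewrite ffunE H.
  by move=> i; rewrite ffunE.
have Ha : \sum_(c : {ffun 'I_n -> bool})
     \prod_i (if c i then W i e else 1 - W i e) = 1.
  rewrite -(bigA_distr_bigA (fun i (b : bool) => if b then W i e else 1 - W i e)).
  apply: big1 => i _.
  by rewrite big_bool /= addrC subrK.
case: b => /=.
  apply: eq_trans Ht; apply: eq_bigl => c; by case: [forall i, c i].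
transitivity (\sum_(c : {ffun 'I_n -> bool}) \prod_i (if c i then W i e else 1 - W i e) - \sum_(c : {ffun 'I_n -> bool} | [forall i, c i]) \prod_i (if c i then W i e else 1 - W i e)); last by rewrite Ha Ht.
rewrite (bigID (fun c : {ffun 'I_n -> bool} => [forall i, c i]) predT) /=.
rewrite addrC addrK; apply: eq_bigl => c; by case: [forall i, c i].
Qed.

Lemma fiber n (W : 'I_n -> E -> R) (S : {set E}) :
  \sum_(Y : {ffun 'I_n -> {set E}} | \bigcap_(i < n) Y i == S)
     \prod_i mX (W i) (Y i) = mX (fun e => \prod_i W i e) S.
Proof.
rewrite mX_prod.
transitivity (\prod_e \sum_(c : {ffun 'I_n -> bool} | [forall i, c i] == (e \in S))
     \prod_i (if c i then W i e else 1 - W i e)); last first.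
  by apply: eq_bigr => e _; rewrite col_sum.
rewrite bigA_distr_big_dep.
pose h (Y : {ffun 'I_n -> {set E}}) : {ffun E -> {ffun 'I_n -> bool}} :=
  [ffun e => [ffun i => e \in Y i]].
pose k (F : {ffun E -> {ffun 'I_n -> bool}}) : {ffun 'I_n -> {set E}} :=
  [ffun i => [set e | F e i]].
rewrite (reindex h); last first.
  exists k => [Y _|F _].
    by apply/ffunP => i; apply/setP => e; rewrite !ffunE inE !ffunE.
  by apply/ffunP => e; apply/ffunP => i; rewrite !ffunE inE.
apply: eq_big => [Y|Y _].
  apply/eqP/familyP => [<- e|H].
    apply/eqP; apply/forallP/bigcapP => [H1 i _|H1 i].
      by have := H1 i; rewrite !ffunE.
    by rewrite !ffunE; apply: H1.
  apply/setP => e; have /eqP <- := H e.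
  apply/bigcapP/forallP => [H1 i|H1 i _]; first by rewrite !ffunE; apply: H1.
  by have := H1 i; rewrite !ffunE.
rewrite exchange_big /=; apply: eq_bigr => i _.
by rewrite mX_prod; apply: eq_bigr => e _; rewrite !ffunE.
Qed.

End H.

Theorem lemma1 (R : numFieldType) (E : finType) (n : nat) (hn : (0 < n)%N)
  (X : 'I_n -> E -> R) (hX : forall i, fuzzy_valid (X i))
  (l : 'I_n -> bool) (j : nat) (hj : (j <= #|E|)%N) :
  let Z := fuzzy_meet l X in
  [/\ FA (unaryQ (Q_exactly R j)) (fun _ : 'I_1 => Z)
        = \sum_(Y : {set E} | #|Y| == j) mX Z Y,
      \sum_(Y : {set E} | #|Y| == j) mX Z Y
        = \sum_(Y : {ffun 'I_n -> {set E}} | #|\bigcap_(i < n) Y i| == j)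
            \prod_(i < n) mX (fuzzy_pow (l i) (X i)) (Y i)
    & \sum_(Y : {ffun 'I_n -> {set E}} | #|\bigcap_(i < n) Y i| == j)
            \prod_(i < n) mX (fuzzy_pow (l i) (X i)) (Y i)
        = FA (fun Y : {ffun 'I_n -> {set E}} => Q_exactly R j (Phi l Y)) X ].
Proof.
move=> Z; split.
- rewrite /FA (reindex (fun S : {set E} => [ffun=> S] : {ffun 'I_1 -> {set E}})); last first.
    exists (fun Y : {ffun 'I_1 -> {set E}} => Y ord0) => [S _|Y _]; first by rewrite ffunE.
    by apply/ffunP => i; rewrite ffunE (ord1 i).
  rewrite [RHS]big_mkcond /=; apply: eq_bigr => S _.
  rewrite big_ord1 /unaryQ /Q_exactly !ffunE.
  by case: (#|S| == j); rewrite ?mulr1 ?mulr0.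
- rewrite [RHS](partition_big (fun Y : {ffun 'I_n -> {set E}} => \bigcap_(i < n) Y i) (fun S : {set E} => #|S| == j)) //=.
  apply: eq_bigr => S /eqP HS.
  rewrite -(@fiber _ _ _ (fun i => fuzzy_pow (l i) (X i))).
  apply: eq_bigl => Y; case: eqP => [->|]; by rewrite ?HS ?eqxx ?andbF ?andbT.
- rewrite /FA (reindex (fun Y : {ffun 'I_n -> {set E}} => [ffun i => crisp_pow (l i) (Y i)])); last first.
    exists (fun Y : {ffun 'I_n -> {set E}} => [ffun i => crisp_pow (l i) (Y i)]) => Y _;
    by apply/ffunP => i; rewrite !ffunE /crisp_pow; case: (l i); rewrite ?setCK.
  rewrite big_mkcond /=; apply: eq_bigr => Y _.
  have -> : \bigcap_(i < n) [ffun i => crisp_pow (l i) (Y i)] i = Phi l Y.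
    by rewrite /Phi; apply: eq_bigr => i _; rewrite ffunE.
  rewrite /Q_exactly; case: (#|Phi l Y| == j); rewrite ?mulr1 ?mulr0 //.
  by apply: eq_bigr => i _; rewrite ffunE mX_pow.
Qed.
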